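(* For every simple game $v$ on $n\ge 2$ players and every player $i$ that is not a dictator in $v$, we have $\mathrm{Js}_i(v)\le\frac{2^{n-1}-1}{2^{n-1}}$.
   Context: A simple game on $N=\{1,\dots,n\}$ is a surjective, monotone map $v\colon 2^N\to\{0,1\}$. Player $j$ is a null player if $v(S)=v(S\cup\{j\})$ for all $S\subseteq N\setminus\{j\}$; player $i$ is a dictator if $v(\{i\})=1$ and all other players are null players. Johnston index: for a winning coalition $T$ (i.e. $v(T)=1$), a player $j\in T$ is critical in $T$ if $v(T\setminus\{j\})=0$; let $\psi'_j(v)=\sum_{T\ni j,\ j\text{ critical in }T}\frac{1}{c(T)}$, where $c(T)$ is the number of players critical in $T$; then $\mathrm{Js}_i(v)=\psi'_i(v)/\sum_{j\in N}\psi'_j(v)$. *)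

(* Defs.v *)
(* Players are 'I_n, coalitions are {set 'I_n},
   a game is v : {set 'I_n} -> bool (true = 1 = winning). *)
From HB Require Import structures.
From mathcomp Require Import all_boot all_order all_algebra.
Set Implicit Arguments. Unset Strict Implicit. Unset Printing Implicit Defensive.
Import Order.TTheory GRing.Theory Num.Theory.

Section Games.
Variable n : nat.
Implicit Types (v : {set 'I_n} -> bool) (S T : {set 'I_n}) (i j : 'I_n).

Definition monotone_game v : Prop :=
  forall S T, S \subset T -> v S -> v T.

Definition surjective_game v : Prop :=
  forall b : bool, exists S, v S = b.

Definition simple_game v : Prop := monotone_game v /\ surjective_game v.

Definition null_player v j : Prop :=
  forall S, j \notin S -> v S = v (j |: S).

Definition dictator v i : Prop :=
  v [set i] /\ forall j, j != i -> null_player v j.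

Definition critical v T j : bool := [&& v T, j \in T & ~~ v (T :\ j)].

Definition ncrit v T : nat := #|[set j | critical v T j]|.

Local Open Scope ring_scope.

Definition psi' v j : rat :=
  \sum_(T : {set 'I_n} | critical v T j) (ncrit v T)%:R^-1.

Definition johnston v i : rat := psi' v i / \sum_(j : 'I_n) psi' v j.

End Games.

(* Main.v *)
Require Import Defs.
From HB Require Import structures.
From mathcomp Require Import all_boot all_order all_algebra.
From mathcomp Require Import lra.
Import Order.TTheory GRing.Theory Num.Theory.
Local Open Scope ring_scope.

Lemma v0 {n} (v : {set 'I_n} -> bool) : simple_game v -> v set0 = false.
Proof.
case=> mono surj; case: (surj false) => S HS.
apply/negbTE/negP => H; by rewrite (mono _ _ (sub0set S) H) in HS.
Qed.

Lemma minimal_ex {n} (v : {set 'I_n} -> bool) T : v T ->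
  exists M : {set 'I_n}, [/\ M \subset T, v M & forall j, j \in M -> ~~ v (M :\ j)].
Proof.
move=> vT; case: (@minset_exists _ [pred B : {set 'I_n} | v B] T vT) => M.
move=> /minsetP [vM minM] sMT.
exists M; split=> // j jM; apply/negP => vMj.
have := minM _ vMj (subsetDl _ _) => E.
by move: jM; rewrite -E !inE eqxx.
Qed.

Lemma crit_min {n} (v : {set 'I_n} -> bool) M :
  v M -> (forall j, j \in M -> ~~ v (M :\ j)) -> [set j | critical v M j] = M.
Proof.
move=> vM minM; apply/setP => j; rewrite inE /critical vM /=.
by case jM: (j \in M) => //=; rewrite minM.
Qed.

Lemma exch {n} (v : {set 'I_n} -> bool) i :
  \sum_(j | j != i) psi' v j =
  \sum_T #|[set j | (j != i) && critical v T j]|%:R / (ncrit v T)%:R.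
Proof.
rewrite /psi'.
under eq_bigr do rewrite big_mkcond.
rewrite exchange_big /=; apply: eq_bigr => T _.
rewrite -big_mkcondr /=.
rewrite (eq_bigl (fun j => j \in [set j | (j != i) && critical v T j])); last by move=> j; rewrite inE.
by rewrite sumr_const (mulr_natl (ncrit v T)%:R^-1).
Qed.

Definition bT {n} (v : {set 'I_n} -> bool) (i : 'I_n) (T : {set 'I_n}) : rat :=
  #|[set j | (j != i) && critical v T j]|%:R / (ncrit v T)%:R.

Lemma bT_ge0 {n} (v : {set 'I_n} -> bool) i T : 0 <= bT v i T.
Proof. by rewrite /bT divr_ge0 ?ler0n. Qed.

Lemma bT_min {n} (v : {set 'I_n} -> bool) i M :
  v M -> (forall j, j \in M -> ~~ v (M :\ j)) -> M != set0 ->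
  (i \notin M -> bT v i M = 1) /\ (i \in M -> M != [set i] -> 1/2 <= bT v i M).
Proof.
move=> vM minM M0.
have E : [set j | (j != i) && critical v M j] = M :\ i.
  apply/setP => j; rewrite !inE /critical vM /=.
  by case jM: (j \in M); rewrite ?andbF //= minM.
rewrite /bT E /ncrit crit_min //.
have HM := cardsD1 i M.
have Mgt0 : (0 < #|M|)%N by rewrite card_gt0.
split=> iM.
  rewrite (negbTE iM) add0n in HM; rewrite -HM divff // pnatr_eq0 -lt0n //.
move=> Mi; rewrite iM add1n in HM.
have M2 : (2 <= #|M|)%N.
  rewrite HM ltnS card_gt0; apply/negP => /eqP D.
  by move/eqP: Mi; apply; rewrite -(setD1K iM) D setU0.
rewrite ler_pdivlMr ?ltr0n //.
have : (2 <= #|M|%:R :> rat) by rewrite (ler_nat rat 2).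
rewrite HM -[#|M :\ i|.+1]addn1 natrD.
move: (#|M :\ i|%:R : rat) => k; lra.
Qed.

Lemma card_contain {n} (i : 'I_n) : (#|[set T : {set 'I_n} | i \in T]| <= 2 ^ n.-1)%N.
Proof.
rewrite -(card_in_imset (f := fun T => T :\ i)); last first.
  move=> T1 T2; rewrite !inE => i1 i2 E.
  by rewrite -(setD1K i1) -(setD1K i2) E.
rewrite -[n in (2 ^ n.-1)%N]card_ord -(cardsC1 i) -card_powerset.
apply: subset_leq_card; apply/subsetP => S /imsetP [T _ ->].
rewrite inE; apply/subsetP => x; rewrite !inE; by case/andP.
Qed.

Lemma psi_le {n} (v : {set 'I_n} -> bool) (i : 'I_n) (T0 : {set 'I_n}) :
  i \in T0 -> ~~ critical v T0 i -> psi' v i <= ((2 ^ n.-1 - 1)%N)%:R.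
Proof.
move=> iT0 nc.
have H1 : psi' v i <= #|[set T | critical v T i]|%:R.
  rewrite /psi' -sum1_card.
  rewrite natr_sum.
  rewrite [X in _ <= X](eq_bigl (fun T => critical v T i)); last by move=> T; rewrite inE.
  apply: ler_sum => T cT.
  rewrite invf_le1 ?ler1n ?ltr0n; apply/card_gt0P; exists i; by rewrite inE.
apply: le_trans H1 _; rewrite ler_nat.
have sub : [set T | critical v T i] \subset [set T : {set 'I_n} | i \in T] :\ T0.
  apply/subsetP => T; rewrite !inE /critical => /and3P [vT iT nv].
  rewrite iT andbT; apply/eqP => E; move: nc; by rewrite -E /critical vT iT nv.
apply: (leq_trans (subset_leq_card sub)).
have := cardsD1 T0 [set T : {set 'I_n} | i \in T]; rewrite inE iT0 add1n => E.
rewrite leq_subRL ?expn_gt0 // add1n -E.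
exact: card_contain.
Qed.

Lemma setcritD {n} (v : {set 'I_n} -> bool) i T :
  [set j | (j != i) && critical v T j] = [set j | critical v T j] :\ i.
Proof. by apply/setP => j; rewrite !inE. Qed.

Lemma termwise {n} (v : {set 'I_n} -> bool) i (K : rat) : 1 <= K ->
  (forall T, critical v T i -> (2 <= ncrit v T)%N) ->
  psi' v i <= K * \sum_T bT v i T.
Proof.
move=> K1 H; rewrite /psi' big_mkcond mulr_sumr; apply: ler_sum => T _.
case cT: (critical v T i); last by rewrite mulr_ge0 ?bT_ge0 // (le_trans ler01 K1).
have c2 := H T cT.
apply: (le_trans _ (ler_peMl (bT_ge0 v i T) K1)).
rewrite /bT; apply: ler_peMl; first by rewrite invr_ge0 ler0n.
have := cardsD1 i [set j | critical v T j].
rewrite inE cT add1n -setcritD => E.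
rewrite (ler_nat rat 1) -ltnS -E; exact: c2.
Qed.

Lemma final_alg (p O K : rat) : 0 <= p -> 0 <= O -> 0 <= K -> p <= K * O ->
  p / (p + O) <= K / (K + 1).
Proof.
move=> p0 O0 K0 h.
have K1 : 0 < K + 1 by lra.
case: (ltrgtP (p + O) 0) => [|hp|hp]; first by lra.
  rewrite ler_pdivrMr // mulrAC ler_pdivlMr //; nra.
have -> : p = 0 by lra.
by rewrite mul0r divr_ge0 // ltW.
Qed.

Lemma Ole {n} (v : {set 'I_n} -> bool) i M : bT v i M <= \sum_T bT v i T.
Proof.
rewrite (bigD1 M) //= lerDl; apply: sumr_ge0 => T _; exact: bT_ge0.
Qed.

Lemma Ole2 {n} (v : {set 'I_n} -> bool) i M1 M2 : M2 != M1 ->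
  bT v i M1 + bT v i M2 <= \sum_T bT v i T.
Proof.
move=> ne; rewrite (bigD1 M1) //= lerD2l (bigD1 M2) //= lerDl.
apply: sumr_ge0 => T _; exact: bT_ge0.
Qed.

Theorem theorem3 (n : nat) (v : {set 'I_n} -> bool) (i : 'I_n) :
  (2 <= n)%N -> simple_game v -> ~ dictator v i ->
  johnston v i <= ((2 ^ n.-1 - 1)%N)%:R / ((2 ^ n.-1)%N)%:R.
Proof.
move=> hn sg nd; have [mono surj] := sg; have vz := v0 v sg.
have m2 : (2 <= 2 ^ n.-1)%N.
  case: n hn {i v sg nd mono surj vz} => [|[|n']] // _ /=.
  by rewrite expnS leq_pmulr // expn_gt0.
set K : rat := ((2 ^ n.-1 - 1)%N)%:R.
have K1 : 1 <= K by rewrite /K (ler_nat rat 1) leq_subRL // ltnW.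
have -> : ((2 ^ n.-1)%N)%:R = K + 1 :> rat.
  by rewrite /K natrB ?subrK // ltnW.
have Oe : \sum_(j | j != i) psi' v j = \sum_T bT v i T by exact: exch.
have key : psi' v i <= K * \sum_T bT v i T.
  case: (boolP [exists T, critical v T i && (ncrit v T < 2)%N]); last first.
    move/existsPn => H; apply: termwise => // T cT.
    by have := H T; rewrite cT /= -leqNgt.
  case/existsP => T0 /andP [cT0 c1].
  suff [T1 [iT1 nc1 O1]] : exists T1 : {set 'I_n}, [/\ i \in T1, ~~ critical v T1 i & 1 <= \sum_T bT v i T].
    apply: le_trans (psi_le _ _ _ iT1 nc1) _.
    by rewrite -[X in X <= _]mulr1 ler_wpM2l // (le_trans ler01 K1).
  case: (boolP [exists T, v T && (i \notin T)]).
    case/existsP => T /andP [vT iT].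
    have [M [sMT vM minM]] := minimal_ex _ _ vT.
    have M0 : M != set0 by apply/eqP => E; rewrite E vz in vM.
    have iM : i \notin M by apply/negP => iM; move: iT; rewrite (subsetP sMT).
    exists (i |: T); split; first by rewrite setU11.
      by rewrite /critical setU1K // vT /= !andbF.
    have [h _] := bT_min _ i _ vM minM M0; rewrite -(h iM); exact: Ole.
  move/existsPn => allI.
  have allI' : forall T, v T -> i \in T.
    by move=> T vT; have := allI T; rewrite vT /= negbK.
  have vi : v [set i] = false.
    apply/negbTE/negP => vi; apply: nd; split=> // j ji S jS.
    case vS: (v S).
      by rewrite (mono _ _ _ vS) // subsetUr.
    apply/esym/negbTE/negP => vjS.
    have := allI' _ vjS; rewrite in_setU1 eq_sym (negbTE ji) /= => iS.
    by rewrite (mono _ _ _ vi) ?sub1set in vS.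
  exists [set i]; split; first by rewrite set11.
    by rewrite /critical vi.
  have vT0 : v T0 by case/and3P: cT0.
  have [M1 [sM1 vM1 minM1]] := minimal_ex _ _ vT0.
  have iM1 := allI' _ vM1.
  have M1i : M1 != [set i] by apply/eqP => E; rewrite E vi in vM1.
  have M10 : M1 != set0 by apply/eqP => E; rewrite E vz in vM1.
  have [j jM1] : exists j, j \in M1 :\ i.
    apply/set0Pn/negP => /eqP D; move/eqP: M1i; apply.
    by rewrite -(setD1K iM1) D setU0.
  move: jM1; rewrite in_setD1 => /andP [ji jM1].
  have jT0 : j \in T0 by rewrite (subsetP sM1).
  have ncj : ~~ critical v T0 j.
    apply/negP => cj; move: c1; rewrite ltnNge; apply/negP/negPn.
    have -> : 2%N = #|[set i; j]| by rewrite cards2 eq_sym ji.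
    apply: subset_leq_card; apply/subsetP => x; rewrite !inE.
    by case/orP => /eqP ->.
  have vT0j : v (T0 :\ j) by move: ncj; rewrite /critical vT0 jT0 /= negbK.
  have [M2 [sM2 vM2 minM2]] := minimal_ex _ _ vT0j.
  have iM2 := allI' _ vM2.
  have M2i : M2 != [set i] by apply/eqP => E; rewrite E vi in vM2.
  have M20 : M2 != set0 by apply/eqP => E; rewrite E vz in vM2.
  have M21 : M2 != M1.
    apply/eqP => E; have := subsetP sM2 j; rewrite E in_setD1 eqxx /=.
    by move/(_ jM1).
  have [_ h1] := bT_min _ i _ vM1 minM1 M10.
  have [_ h2] := bT_min _ i _ vM2 minM2 M20.
  have := Ole2 v i M1 M2 M21; have := h1 iM1 M1i; have := h2 iM2 M2i; lra.
have psi0 : 0 <= psi' v i by apply: sumr_ge0 => T _; rewrite invr_ge0 ler0n.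
have O0 : 0 <= \sum_T bT v i T by apply: sumr_ge0 => T _; exact: bT_ge0.
rewrite /johnston (bigD1 i) //= Oe.
apply: final_alg => //; exact: le_trans ler01 K1.
Qed.
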